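(* Consider the two-camp, two-phase zero-sum game with bias-dependent camp weights described in the context. For either camp and any fixed strategy of the other camp, it is optimal to exhaust the entire budget, and if not, it is optimal to not invest at all. Furthermore, it is an optimal strategy to invest on at most one node in a given phase (i.e., there is a best response in which each of the camp's two phase-investment vectors has at most one nonzero entry).
   Context: A social network has node set $N=\{1,\dots,n\}$ and a real $n\times n$ matrix $\mathbf{w}=(w_{ij})$ with $\sum_j|w_{ij}|<1$ for every $i$; write $\Delta=(\mathbf{I}-\mathbf{w})^{-1}$. Each node $i$ has an initial opinion $v_i^0$, a bias weight $w_{ii}^0$, and a total camp weight $\theta_i$. The good camp chooses $\mathbf{x^{(1)}},\mathbf{x^{(2)}}\ge 0$ with $\sum_i(x_i^{(1)}+x_i^{(2)})\le k_g$; the bad camp chooses $\mathbf{y^{(1)}},\mathbf{y^{(2)}}\ge 0$ with $\sum_i(y_i^{(1)}+y_i^{(2)})\le k_b$ ($k_g,k_b\ge0$). Opinions evolve by $\mathbf{v^{(0)}}=\mathbf{v^0}$ and for $p=1,2$: $\mathbf{v^{(p)}}=\Delta(\mathbf{w^0}\circ\mathbf{v^{(p-1)}}+\mathbf{w_g^{(p)}}\circ\mathbf{x^{(p)}}-\mathbf{w_b^{(p)}}\circ\mathbf{y^{(p)}})$, where $\circ$ is the entrywise product, $\mathbf{w^0}=(w_{ii}^0)_i$, $w_{ig}^{(p)}=\theta_i\frac{1+w_{ii}^0v_i^{(p-1)}}{2}$ and $w_{ib}^{(p)}=\theta_i\frac{1-w_{ii}^0v_i^{(p-1)}}{2}$.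 The good camp's utility is $\sum_i v_i^{(2)}$ and the bad camp's utility is $-\sum_i v_i^{(2)}$. *)

(* Defs.v *)
From HB Require Import structures.
From mathcomp Require Import all_boot all_order all_algebra.
Set Implicit Arguments. Unset Strict Implicit. Unset Printing Implicit Defensive.
Import Order.TTheory GRing.Theory Num.Theory.
Local Open Scope ring_scope.

Section Game.
Variables (R : realFieldType) (n : nat).

Definition Delta (w : 'M[R]_n) : 'M[R]_n := invmx (1%:M - w).

Definition wgood (theta w0 v : 'cV[R]_n) : 'cV[R]_n :=
  \col_i (theta i 0 * ((1 + w0 i 0 * v i 0) / 2)).
Definition wbad (theta w0 v : 'cV[R]_n) : 'cV[R]_n :=
  \col_i (theta i 0 * ((1 - w0 i 0 * v i 0) / 2)).

Definition phase (w : 'M[R]_n) (w0 theta v x y : 'cV[R]_n) : 'cV[R]_n :=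
  Delta w *m (\col_i (w0 i 0 * v i 0 + wgood theta w0 v i 0 * x i 0
                      - wbad theta w0 v i 0 * y i 0)).

Definition opinion2 (w : 'M[R]_n) (w0 theta v0 x1 x2 y1 y2 : 'cV[R]_n) :=
  phase w w0 theta (phase w w0 theta v0 x1 y1) x2 y2.

Definition good_utility w w0 theta v0 x1 x2 y1 y2 : R :=
  \sum_i opinion2 w w0 theta v0 x1 x2 y1 y2 i 0.
Definition bad_utility w w0 theta v0 x1 x2 y1 y2 : R :=
  - good_utility w w0 theta v0 x1 x2 y1 y2.

Definition invested (z1 z2 : 'cV[R]_n) : R := \sum_i (z1 i 0 + z2 i 0).

Definition feasible (k : R) (z1 z2 : 'cV[R]_n) : Prop :=
  (forall i, 0 <= z1 i 0) /\ (forall i, 0 <= z2 i 0) /\ invested z1 z2 <= k.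

Definition support (z : 'cV[R]_n) : {set 'I_n} := [set i : 'I_n | z i 0 != 0].
Definition at_most_one_node (z : 'cV[R]_n) : Prop :=
  (#|support z| <= 1)%N.

Definition good_best_response w w0 theta v0 kg (y1 y2 x1 x2 : 'cV[R]_n) : Prop :=
  feasible kg x1 x2 /\
  forall x1' x2', feasible kg x1' x2' ->
    good_utility w w0 theta v0 x1' x2' y1 y2 <= good_utility w w0 theta v0 x1 x2 y1 y2.

Definition bad_best_response w w0 theta v0 kb (x1 x2 y1 y2 : 'cV[R]_n) : Prop :=
  feasible kb y1 y2 /\
  forall y1' y2', feasible kb y1' y2' ->
    bad_utility w w0 theta v0 x1 x2 y1' y2' <= bad_utility w w0 theta v0 x1 x2 y1 y2.

End Game.

(* Main.v *)
From HB Require Import structures.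
From mathcomp Require Import all_boot all_order all_algebra.
From mathcomp Require Import ring lra.
Require Import Defs.
Import Order.TTheory GRing.Theory Num.Theory.
Set Implicit Arguments. Unset Strict Implicit.
Local Open Scope ring_scope.
Section S. Variable R : realFieldType.
Lemma tri (P Q T W k t1 t2 : R) : 0 <= t1 -> 0 <= t2 -> t1 + t2 <= k ->
  let f s t := P + Q * s + T * t + W * s * t in
  f t1 t2 <= f 0 0 \/ f t1 t2 <= f 0 k \/ f t1 t2 <= f (k - t2) t2.
Proof.
move=> h1 h2 hk f; rewrite /f.
case: (lerP 0 (Q + W * t2)) => hq.
  right; right. have := ler_wpM2r hq (_ : t1 <= k - t2). move=> /(_ ltac:(lra)) H. nra.
have H1 : t1 * (Q + W * t2) <= 0 by nra.
case: (lerP 0 T) => ht.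
  right; left. have : T * t2 <= T * k by nra. nra.
left. nra.
Qed.

Definition qarg (B C k : R) : R :=
  if 0 <= C then (if 0 <= B * k + C * k ^+ 2 then k else 0)
  else if - B / (2 * C) < 0 then 0 else if k < - B / (2 * C) then k else - B / (2 * C).

Lemma qargP B C k : 0 <= k -> (0 <= qarg B C k /\ qarg B C k <= k) /\
  forall s, 0 <= s -> s <= k -> B * s + C * s ^+ 2 <= B * qarg B C k + C * (qarg B C k) ^+ 2.
Proof.
move=> k0; rewrite /qarg; case: ifP => HC.
  have key : forall s, 0 <= s -> s <= k -> k * (B * s + C * s ^+ 2) <= s * (B * k + C * k ^+ 2).
    move=> s s0 sk. have : 0 <= C * s * k * (k - s).
      by rewrite !mulr_ge0 // subr_ge0.
    move=> H. have E : s * (B * k + C * k ^+ 2) - k * (B * s + C * s ^+ 2) = C * s * k * (k - s) by ring.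
    rewrite -subr_ge0 E //.
  case: ifP => Hg; (split; [lra|]) => s s0 sk; have := key s s0 sk;
    case: (lerP k 0) => kp.
  - have -> : s = 0 by lra. have -> : k = 0 by lra. rewrite !expr2; lra.
  - move=> H; have : k * (B * s + C * s ^+ 2) <= k * (B * k + C * k ^+ 2) by nra.
    by rewrite ler_pM2l.
  - have -> : s = 0 by lra. have -> : k = 0 by lra. rewrite !expr2; lra.
  - move=> H; have : k * (B * s + C * s ^+ 2) <= k * (B * 0 + C * 0 ^+ 2).
      rewrite !expr2 !mulr0 addr0; move/negbT: Hg; rewrite -ltNge => Hg; nra.
    by rewrite ler_pM2l.
move/negbT: HC; rewrite -ltNge => HC.
set v := - B / (2 * C).
have HB : B = - (2 * C) * v by rewrite /v; field; rewrite (ltr0_neq0 HC).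
case: ifP => Hv0.
  split; [lra|] => s s0 sk. rewrite HB !expr2.
  have : 0 <= s * (s - 2 * v) by rewrite mulr_ge0 //; lra. nra.
case: ifP => Hvk.
  split; [lra|] => s s0 sk. rewrite HB !expr2.
  have : (k - s) * (2 * v - s - k) >= 0 by rewrite mulr_ge0 //; lra. nra.
move/negbT: Hv0; rewrite -leNgt => Hv0. move/negbT: Hvk; rewrite -leNgt => Hvk.
split; [lra|] => s s0 sk. rewrite HB !expr2.
have : 0 <= (s - v) * (s - v) by rewrite -expr2 sqr_ge0.
nra.
Qed.
Definition aff n (f : 'cV[R]_n -> R) :=
  exists (c : R) (a : 'I_n -> R), forall x, f x = c + \sum_i a i * x i 0.

Lemma aff_ext n (f g : 'cV[R]_n -> R) : (forall x, f x = g x) -> aff g -> aff f.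
Proof. move=> E [c [a H]]; exists c, a => x; by rewrite E H. Qed.

Lemma aff_lin n (l : 'I_n) (a b : R) : aff (fun x => a + b * x l 0).
Proof.
exists a, (fun i => if i == l then b else 0) => x.
congr (_ + _); rewrite (bigD1 l) //= eqxx big1 ?addr0 // => i /negbTE ->; by rewrite mul0r.
Qed.

Lemma aff_comp n (f : 'cV[R]_n -> R) a b : aff f -> aff (fun x => a + b * f x).
Proof.
move=> [c [e H]]; exists (a + b * c), (fun i => b * e i) => x.
rewrite H mulrDr addrA; congr (_ + _); rewrite mulr_sumr; apply: eq_bigr => i _; by rewrite mulrA.
Qed.

Lemma aff_add n (f g : 'cV[R]_n -> R) : aff f -> aff g -> aff (fun x => f x + g x).
Proof.
move=> [c [e H]] [c' [e' H']]; exists (c + c'), (fun i => e i + e' i) => x.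
rewrite H H'.
have -> : \sum_i (e i + e' i) * x i 0 = \sum_i e i * x i 0 + \sum_i e' i * x i 0.
  rewrite -big_split; apply: eq_bigr => i _; by rewrite mulrDl.
ring.
Qed.

Lemma aff_sum n m (r : seq 'I_m) (F : 'I_m -> 'cV[R]_n -> R) :
  (forall j, aff (F j)) -> aff (fun x => \sum_(j <- r) F j x).
Proof.
move=> H; elim: r => [|j r IH].
  exists 0, (fun _ => 0) => x; rewrite big_nil big1 ?add0r // => i _; by rewrite mul0r.
apply: (@aff_ext _ _ (fun x => F j x + \sum_(j <- r) F j x)).
  by move=> x; rewrite big_cons.
exact: aff_add.
Qed.

Lemma aff_sumI n m (F : 'I_m -> 'cV[R]_n -> R) :
  (forall j, aff (F j)) -> aff (fun x => \sum_j F j x).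
Proof. exact: aff_sum. Qed.

Lemma phaseE n (w : 'M[R]_n) w0 th v x y i :
  phase w w0 th v x y i 0 = \sum_l Delta w i l * (w0 l 0 * v l 0
     + th l 0 * ((1 + w0 l 0 * v l 0) / 2) * x l 0 - th l 0 * ((1 - w0 l 0 * v l 0) / 2) * y l 0).
Proof. rewrite /phase mxE; apply: eq_bigr => l _; by rewrite !mxE. Qed.

Lemma phase_aff_v n (w : 'M[R]_n) w0 th x y m (V : 'cV[R]_m -> 'cV[R]_n) :
  (forall l, aff (fun z => V z l 0)) -> forall i, aff (fun z => phase w w0 th (V z) x y i 0).
Proof.
move=> HV i; apply: (aff_ext (fun z => phaseE _ _ _ _ _ _ _)); apply: aff_sumI => l.
apply: (@aff_ext _ _ (fun z => Delta w i l * (th l 0 * 2^-1 * x l 0 - th l 0 * 2^-1 * y l 0)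
   + Delta w i l * (w0 l 0 + th l 0 * w0 l 0 * 2^-1 * x l 0 + th l 0 * w0 l 0 * 2^-1 * y l 0) * V z l 0)).
  move=> z /=; ring.
exact: aff_comp.
Qed.

Lemma phase_aff_x n (w : 'M[R]_n) w0 th v y i : aff (fun z => phase w w0 th v z y i 0).
Proof.
apply: (aff_ext (fun z => phaseE _ _ _ _ _ _ _)); apply: aff_sumI => l.
apply: (@aff_ext _ _ (fun z => Delta w i l * (w0 l 0 * v l 0 - th l 0 * ((1 - w0 l 0 * v l 0) / 2) * y l 0)
   + Delta w i l * (th l 0 * ((1 + w0 l 0 * v l 0) / 2)) * z l 0)).
  move=> z /=; ring.
exact: aff_lin.
Qed.

Lemma phase_aff_y n (w : 'M[R]_n) w0 th v x i : aff (fun z => phase w w0 th v x z i 0).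
Proof.
apply: (aff_ext (fun z => phaseE _ _ _ _ _ _ _)); apply: aff_sumI => l.
apply: (@aff_ext _ _ (fun z => Delta w i l * (w0 l 0 * v l 0 + th l 0 * ((1 + w0 l 0 * v l 0) / 2) * x l 0)
   + (- (Delta w i l * (th l 0 * ((1 - w0 l 0 * v l 0) / 2)))) * z l 0)).
  move=> z /=; ring.
exact: aff_lin.
Qed.
Definition ev n (i : 'I_n) (s : R) : 'cV[R]_n := \col_l (if l == i then s else 0).

Lemma sum_ev n (i : 'I_n) s : \sum_l ev i s l 0 = s.
Proof. rewrite (bigD1 i) //= mxE eqxx big1 ?addr0 // => l /negbTE Hl; by rewrite mxE Hl. Qed.

Lemma aff_ev n (f : 'cV[R]_n -> R) c a (H : forall x, f x = c + \sum_l a l * x l 0) i s :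
  f (ev i s) = c + a i * s.
Proof. rewrite H (bigD1 i) //= mxE eqxx big1 ?addr0 // => l /negbTE Hl; by rewrite mxE Hl mulr0. Qed.

Lemma aff_line n (f : 'cV[R]_n -> R) i s : aff f ->
  f (ev i s) = f (ev i 0) + s * (f (ev i 1) - f (ev i 0)).
Proof. move=> [c [a H]]; rewrite !(aff_ev H); ring. Qed.

Lemma ev0 n (i : 'I_n) : ev i 0 = 0.
Proof. apply/matrixP => l j; rewrite !mxE; by case: ifP. Qed.

Lemma ev_one n (i : 'I_n) s : at_most_one_node (ev i s).
Proof.
rewrite /at_most_one_node -(cards1 i); apply: subset_leq_card; apply/subsetP => l.
rewrite /support !inE mxE; case: (l =P i) => // _; by rewrite eqxx.
Qed.

Lemma ev_ge0 n (i : 'I_n) s : 0 <= s -> forall l, 0 <= ev i s l 0.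
Proof. move=> s0 l; rewrite mxE; by case: ifP. Qed.

Lemma argmax_ex (I : finType) (i0 : I) (F : I -> R) : exists m, forall l, F l <= F m.
Proof.
case: (@arg_maxP _ R I i0 xpredT F isT) => m _ H; exists m => l; exact: H.
Qed.

Lemma stepA n (f : 'cV[R]_n.+1 -> R) (x : 'cV[R]_n.+1) : aff f -> (forall l, 0 <= x l 0) ->
  exists i, f x <= f (ev i (\sum_l x l 0)).
Proof.
move=> [c [a H]] x0. have [m Hm] := argmax_ex ord0 a. exists m.
rewrite (aff_ev H) H lerD2l mulr_sumr. apply: ler_sum => l _. have := x0 l; have := Hm l; nra.
Qed.

Lemma bilin n (U : 'cV[R]_n -> 'cV[R]_n -> R)
  (H1 : forall x2, aff (fun x1 => U x1 x2)) (H2 : forall x1, aff (fun x2 => U x1 x2)) i j s t :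
  U (ev i s) (ev j t) = U (ev i 0) (ev j 0) + s * (U (ev i 1) (ev j 0) - U (ev i 0) (ev j 0))
     + t * (U (ev i 0) (ev j 1) - U (ev i 0) (ev j 0))
     + s * t * (U (ev i 1) (ev j 1) - U (ev i 1) (ev j 0) - U (ev i 0) (ev j 1) + U (ev i 0) (ev j 0)).
Proof.
have E1 := aff_line i s (H1 (ev j t)).
have E2 := aff_line j t (H2 (ev i 0)).
have E3 := aff_line j t (H2 (ev i 1)).
simpl in E1, E2, E3. rewrite E1 E2 E3. ring.
Qed.

Lemma inv_split n (x1 x2 : 'cV[R]_n) : invested x1 x2 = \sum_l x1 l 0 + \sum_l x2 l 0.
Proof. by rewrite /invested big_split. Qed.

Lemma key_pos n (U : 'cV[R]_n.+1 -> 'cV[R]_n.+1 -> R) k : 0 <= k ->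
  (forall x2, aff (fun x1 => U x1 x2)) -> (forall x1, aff (fun x2 => U x1 x2)) ->
  exists x1 x2, feasible k x1 x2 /\
    (forall x1' x2', feasible k x1' x2' -> U x1' x2' <= U x1 x2) /\
    (invested x1 x2 = k \/ invested x1 x2 = 0) /\ at_most_one_node x1 /\ at_most_one_node x2.
Proof.
move=> k0 H1 H2.
pose F i j s t := U (ev i s) (ev j t).
pose P i j := F i j 0 0.
pose Q i j := F i j 1 0 - F i j 0 0.
pose T i j := F i j 0 1 - F i j 0 0.
pose W i j := F i j 1 1 - F i j 1 0 - F i j 0 1 + F i j 0 0.
have Fform : forall i j s t, F i j s t = P i j + Q i j * s + T i j * t + W i j * s * t.
  move=> i j s t; rewrite /P /Q /T /W /F (bilin H1 H2); ring.
pose B i j := Q i j - T i j + W i j * k.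
pose C i j := - W i j.
have Gform : forall i j s, F i j s (k - s) = (P i j + T i j * k) + (B i j * s + C i j * s ^+ 2).
  move=> i j s; rewrite Fform /B /C expr2; ring.
pose so i j := qarg (B i j) (C i j) k.
pose val i j := F i j (so i j) (k - so i j).
have Gmax : forall i j s, 0 <= s -> s <= k -> F i j s (k - s) <= val i j.
  move=> i j s s0 sk; rewrite /val !Gform lerD2l.
  by case: (qargP (B i j) (C i j) k0) => _; apply.
have so_rng : forall i j, 0 <= so i j /\ so i j <= k.
  move=> i j; by case: (qargP (B i j) (C i j) k0).
have [[i0 j0] Hm] := argmax_ex (ord0, ord0) (fun p => val p.1 p.2).
have P00 : forall i j, P i j = U 0 0 by move=> i j; rewrite /P /F !ev0.
have bound : forall x1 x2, feasible k x1 x2 -> U x1 x2 <= Num.max (U 0 0) (val i0 j0).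
  move=> x1 x2 [h1 [h2 hk]].
  have t10 : 0 <= \sum_l x1 l 0 by apply: sumr_ge0.
  have t20 : 0 <= \sum_l x2 l 0 by apply: sumr_ge0.
  rewrite inv_split in hk.
  have [i Hi] := stepA (H1 x2) h1.
  have [j Hj] := stepA (H2 (ev i (\sum_l x1 l 0))) h2.
  apply: (le_trans Hi); apply: (le_trans Hj).
  have Hv : val i j <= val i0 j0 := Hm (i, j).
  set t1 := \sum_l x1 l 0 in t10 hk Hi Hj *.
  set t2 := \sum_l x2 l 0 in t20 hk Hi Hj *.
  change (F i j t1 t2 <= Num.max (U 0 0) (val i0 j0)).
  have := tri (P i j) (Q i j) (T i j) (W i j) t10 t20 hk; rewrite /= -!Fform.
  have G0 := Gmax i j 0 (lexx _) k0. rewrite subr0 in G0.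
  have G1 := Gmax i j (k - t2) ltac:(lra) ltac:(lra). rewrite (_ : k - (k - t2) = t2) in G1; last by ring.
  rewrite le_max; case => [|[]] H.
  - by apply/orP; left; rewrite -(P00 i j).
  - apply/orP; right; lra.
  - apply/orP; right; lra.
case: (lerP (val i0 j0) (U 0 0)) => Hc.
  exists 0, 0; split; first by split; [move=> l; rewrite mxE|split; [move=> l; rewrite mxE|rewrite /invested big1 // => l _; rewrite !mxE addr0]].
  split; first by move=> x1 x2 /bound; rewrite max_l.
  split; first by right; rewrite /invested big1 // => l _; rewrite !mxE addr0.
  by rewrite -(ev0 ord0); split; apply: ev_one.
have [s0 sk] := so_rng i0 j0.
exists (ev i0 (so i0 j0)), (ev j0 (k - so i0 j0)).
have Hinv : invested (ev i0 (so i0 j0)) (ev j0 (k - so i0 j0)) = k.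
  by rewrite inv_split !sum_ev; ring.
split; first by split; [exact: ev_ge0|split; [apply: ev_ge0; lra|rewrite Hinv]].
split; first by move=> x1 x2 /bound; rewrite max_r ?(ltW Hc).
split; first by left.
split; exact: ev_one.
Qed.

Lemma key n (U : 'cV[R]_n -> 'cV[R]_n -> R) k : 0 <= k ->
  (forall x2, aff (fun x1 => U x1 x2)) -> (forall x1, aff (fun x2 => U x1 x2)) ->
  exists x1 x2, feasible k x1 x2 /\
    (forall x1' x2', feasible k x1' x2' -> U x1' x2' <= U x1 x2) /\
    (invested x1 x2 = k \/ invested x1 x2 = 0) /\ at_most_one_node x1 /\ at_most_one_node x2.
Proof.
case: n U => [|n] U; last exact: key_pos.
move=> k0 _ _; exists 0, 0.
have E : forall z : 'cV[R]_0, z = 0 by move=> z; apply/matrixP => [[]].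
split; first by split; [case|split; [case|rewrite /invested big_ord0]].
split; first by move=> x1 x2 _; rewrite (E x1) (E x2).
split; first by right; rewrite /invested big_ord0.
by rewrite /at_most_one_node; split; apply: leq_trans (max_card _) _; rewrite card_ord.
Qed.

Lemma good_aff1 n (w : 'M[R]_n) v0 w0 theta y1 y2 x2 :
  aff (fun x1 => good_utility w w0 theta v0 x1 x2 y1 y2).
Proof.
apply: aff_sumI => i; rewrite /opinion2.
apply: (@phase_aff_v _ w w0 theta x2 y2 _ (fun z => phase w w0 theta v0 z y1)) => l.
exact: phase_aff_x.
Qed.

Lemma good_aff2 n (w : 'M[R]_n) v0 w0 theta y1 y2 x1 :
  aff (fun x2 => good_utility w w0 theta v0 x1 x2 y1 y2).
Proof. apply: aff_sumI => i; exact: phase_aff_x. Qed.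

Lemma bad_aff1 n (w : 'M[R]_n) v0 w0 theta x1 x2 y2 :
  aff (fun y1 => bad_utility w w0 theta v0 x1 x2 y1 y2).
Proof.
apply: (@aff_ext _ _ (fun y1 => 0 + (-1) * good_utility w w0 theta v0 x1 x2 y1 y2)).
  by move=> y; rewrite /bad_utility add0r mulN1r.
apply: aff_comp; apply: aff_sumI => i; rewrite /opinion2.
apply: (@phase_aff_v _ w w0 theta x2 y2 _ (fun z => phase w w0 theta v0 x1 z)) => l.
exact: phase_aff_y.
Qed.

Lemma bad_aff2 n (w : 'M[R]_n) v0 w0 theta x1 x2 y1 :
  aff (fun y2 => bad_utility w w0 theta v0 x1 x2 y1 y2).
Proof.
apply: (@aff_ext _ _ (fun y2 => 0 + (-1) * good_utility w w0 theta v0 x1 x2 y1 y2)).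
  by move=> y; rewrite /bad_utility add0r mulN1r.
apply: aff_comp; apply: aff_sumI => i; exact: phase_aff_y.
Qed.
End S.
Unset Implicit Arguments.

Theorem lemma2 (R : realFieldType) (n : nat) (w : 'M[R]_n)
  (v0 w0 theta : 'cV[R]_n) (kg kb : R) :
  (forall i : 'I_n, \sum_j `|w i j| < 1) ->
  0 <= kg -> 0 <= kb ->
  (forall y1 y2 : 'cV[R]_n, feasible kb y1 y2 ->
     exists x1 x2 : 'cV[R]_n,
       good_best_response w w0 theta v0 kg y1 y2 x1 x2 /\
       (invested x1 x2 = kg \/ invested x1 x2 = 0) /\
       at_most_one_node x1 /\ at_most_one_node x2) /\
  (forall x1 x2 : 'cV[R]_n, feasible kg x1 x2 ->
     exists y1 y2 : 'cV[R]_n,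
       bad_best_response w w0 theta v0 kb x1 x2 y1 y2 /\
       (invested y1 y2 = kb \/ invested y1 y2 = 0) /\
       at_most_one_node y1 /\ at_most_one_node y2).
Proof.
move=> _ kg0 kb0; split.
  move=> y1 y2 _.
  have [||x1 [x2 [F [B H]]]] := @key R _ (fun a b => good_utility w w0 theta v0 a b y1 y2) kg kg0.
  - move=> ?; exact: good_aff1.
  - move=> ?; exact: good_aff2.
  - by exists x1, x2.
move=> x1 x2 _.
have [||y1 [y2 [F [B H]]]] := @key R _ (fun a b => bad_utility w w0 theta v0 x1 x2 a b) kb kb0.
- move=> ?; exact: bad_aff1.
- move=> ?; exact: bad_aff2.
- by exists y1, y2.
Qed.
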